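(* Let $\mathcal{G}=(\mathcal{V},\mathcal{E})$ be a graph with node set $\mathcal{V}=\{1,\dots,n\}$, adjacency matrix $A=[a_{ij}]\in\{0,1\}^{n\times n}$ (with $a_{ij}=1$ iff $(i,j)\in\mathcal{E}$), and degree matrix $D=\mathrm{diag}(d_1,\dots,d_n)$, where $d_i=\sum_{j=1}^n a_{ij}$; assume $d_i>0$ for all $i$, so that $D^{-1}$ exists. Let $X\in\mathbb{R}^{n\times d}$ be a node feature matrix, $W_1\in\mathbb{R}^{d\times d'}$ and $W_2\in\mathbb{R}^{d'\times d'}$ (the propagation matrix). Consider the feature propagation process $$\widetilde{X} = X W_1 + D^{-1} A\, \widetilde{X}\, W_2,$$ equivalently, row-wise, $\widetilde{x_i}=W_1^T x_i + W_2^T \sum_{j\in \mathcal{N}(i)}\frac{1}{d_i}\widetilde{x_j}$ for $i=1,\dots,n$, where $\mathcal{N}(i)$ is the set of neighbors of node $i$, $x_i^T$ is the $i$-th row of $X$ and $\widetilde{x_i}^T$ is the $i$-th row of $\widetilde{X}$. Suppose that (1) $W_2$ is entrywise nonnegative, and (2) $\max\{W_2^T\mathbf{e}\}<1$, where $\mathbf{e}$ is the all-ones vector and the maximum is over the entries of the vector $W_2^T\mathbf{e}$ (i.e., every column sum of $W_2$ is strictly less than $1$). Then the propagation process is convergent: the iteration $\widetilde{X}^{(t+1)} = X W_1 + D^{-1}A\widetilde{X}^{(t)}W_2$ converges for every initial $\widetilde{X}^{(0)}\in\mathbb{R}^{n\times d'}$, and its limit is the unique solution $\widetilde{X}\in\mathbb{R}^{n\times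 d'}$ of the equation $\widetilde{X} = X W_1 + D^{-1} A \widetilde{X} W_2$.
   Context: All matrices are real. $\mathbf{e}$ denotes the all-ones column vector of the appropriate dimension. For a vector $v$, $\max\{v\}$ denotes its largest entry. *)

(* Defs.v *)
From HB Require Import structures.
From mathcomp Require Import all_boot all_order all_algebra.
From mathcomp Require Import all_classical all_reals all_analysis.
Set Implicit Arguments. Unset Strict Implicit. Unset Printing Implicit Defensive.
Import Order.TTheory GRing.Theory Num.Theory numFieldNormedType.Exports.
Local Open Scope ring_scope.

Definition deg (R : realType) (n : nat) (A : 'M[R]_n) (i : 'I_n) : R :=
  \sum_(j < n) A i j.

Definition degmx (R : realType) (n : nat) (A : 'M[R]_n) : 'M[R]_n :=
  diag_mx (\row_i deg A i).

Definition prop_step (R : realType) (n d d' : nat) (A : 'M[R]_n)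
  (X : 'M[R]_(n, d)) (W1 : 'M[R]_(d, d')) (W2 : 'M[R]_d') (Y : 'M[R]_(n, d'))
  : 'M[R]_(n, d') :=
  X *m W1 + invmx (degmx A) *m A *m Y *m W2.

Definition prop_iter (R : realType) (n d d' : nat) (A : 'M[R]_n)
  (X : 'M[R]_(n, d)) (W1 : 'M[R]_(d, d')) (W2 : 'M[R]_d') (X0 : 'M[R]_(n, d'))
  (t : nat) : 'M[R]_(n, d') :=
  iter t (prop_step A X W1 W2) X0.

(* Main.v *)
Require Import Defs.
From HB Require Import structures.
From mathcomp Require Import all_boot all_order all_algebra.
From mathcomp Require Import all_classical all_reals all_analysis.
Import Order.TTheory GRing.Theory Num.Theory numFieldNormedType.Exports.
Local Open Scope ring_scope.
Local Open Scope classical_set_scope.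

HB.instance Definition _ (R : realType) m n := Complete.on 'M[R]_(m,n).

Section S.
Variables (R : realType) (m n : nat).
Lemma mxnorm_le (M : 'M[R]_(m, n)) c : 0 <= c -> (forall i j, `|M i j| <= c) -> `|M| <= c.
Proof.
move=> c0 H. have -> : `|M| = mx_norm M by []. rewrite mx_normrE. apply/bigmax_leP; split => // ij _; exact: H.
Qed.
Lemma mxnorm_ge (M : 'M[R]_(m, n)) i j : `|M i j| <= `|M|.
Proof.
have -> : `|M| = mx_norm M by []. rewrite mx_normrE. exact: (le_bigmax _ _ (i, j)).
Qed.
End S.

Lemma Pentry (R : realType) (n : nat) (A : 'M[R]_n) :
  (forall i, 0 < deg A i) ->
  forall i k, (invmx (degmx A) *m A) i k = (deg A i)^-1 * A i k.
Proof.
move=> hpos.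
pose E : 'M[R]_n := diag_mx (\row_i (deg A i)^-1).
have DE : degmx A *m E = 1%:M.
  apply/matrixP => i j; rewrite /E /degmx mul_diag_mx !mxE.
  case: eqP => [->|]; rewrite ?mulr1n ?mulr0n ?mulr0 //.
  by rewrite mulfV // gt_eqF.
have [uD _] := mulmx1_unit DE.
have -> : invmx (degmx A) = E.
  by rewrite -[E](mulKmx uD) DE mulmx1.
by move=> i k; rewrite /E mul_diag_mx !mxE.
Qed.

Theorem theorem1 (R : realType) (n d d' : nat) (A : 'M[R]_n)
  (X : 'M[R]_(n, d)) (W1 : 'M[R]_(d, d')) (W2 : 'M[R]_d') :
  (forall i j, A i j = 0 \/ A i j = 1) ->
  (forall i, 0 < deg A i) ->
  (forall i j, 0 <= W2 i j) ->
  (forall j, \sum_(i < d') W2 i j < 1) ->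
  exists Xs : 'M[R]_(n, d'),
    Xs = prop_step A X W1 W2 Xs /\
    (forall Y : 'M[R]_(n, d'), Y = prop_step A X W1 W2 Y -> Y = Xs) /\
    (forall X0 : 'M[R]_(n, d'), prop_iter A X W1 W2 X0 @ \oo --> Xs).
Proof.
move=> A01 hpos W2ge0 Wcol.
have Age0 : forall i j, 0 <= A i j by move=> i j; case: (A01 i j) => ->.
set P := invmx (degmx A) *m A.
have PE := @Pentry R n A hpos.
have Pge0 : forall i k, 0 <= P i k.
  by move=> i k; rewrite PE mulr_ge0 // invr_ge0 ltW.
have Prow : forall i, \sum_k P i k = 1.
  move=> i; under eq_bigr do rewrite PE.
  by rewrite -mulr_sumr -/(deg A i) mulVf // gt_eqF.
set q := \big[Num.max/0]_(j < d') \sum_(i < d') W2 i j.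
have q1 : q < 1.
  rewrite /q; elim/big_ind: _ => //.
  by move=> x y hx hy; rewrite gt_max hx hy.
have qge0 : 0 <= q.
  rewrite /q; elim/big_ind: _ => //.
  - by move=> x y hx hy; rewrite le_max hx.
  - by move=> j _; apply: sumr_ge0 => i _; exact: W2ge0.
have colq : forall l, \sum_(j < d') W2 j l <= q.
  by move=> l; rewrite /q; exact: (le_bigmax _ _ l).
have bound : forall M : 'M[R]_(n, d'), `|P *m M *m W2| <= q * `|M|.
  move=> M; apply: mxnorm_le; first by rewrite mulr_ge0.
  move=> i l; rewrite mxE.
  apply: (le_trans (ler_norm_sum _ _ _)).
  apply: (@le_trans _ _ (\sum_(j < d') `|M| * W2 j l)).
    apply: ler_sum => j _; rewrite normrM (ger0_norm (W2ge0 _ _)).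
    apply: ler_wpM2r => //; rewrite mxE.
    apply: (le_trans (ler_norm_sum _ _ _)).
    apply: (@le_trans _ _ (\sum_(k < n) P i k * `|M|)).
      apply: ler_sum => k _; rewrite normrM (ger0_norm (Pge0 _ _)).
      by apply: ler_wpM2l => //; exact: mxnorm_ge.
    by rewrite -mulr_suml Prow mul1r.
  by rewrite -mulr_sumr mulrC ler_wpM2r.
pose F := prop_step A X W1 W2.
pose f : {fun [set: 'M[R]_(n, d')] >-> [set: 'M[R]_(n, d')]} := totalfun_ setT F.
have ctr : contraction (NngNum qge0) f.
  split => //=.
  move=> [x y] _ /=.
  rewrite /f /totalfun_ /F /prop_step.
  rewrite opprD addrACA subrr add0r -mulmxBl -mulmxBr.
  exact: bound.
have isctr : is_contraction f by exists (NngNum qge0).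
pose Xs := limn (fun t => iter t f 0).
have fixXs : Xs = f Xs := @contraction_cvg_fixed R 'M[R]_(n, d') _ f _ ctr 0 I closedT.
have uniq : forall Y, Y = F Y -> Y = Xs.
  move=> Y hY; exact: (contraction_fixpoint_unique isctr I I hY fixXs).
exists Xs; split; first exact: fixXs.
split; first exact: uniq.
move=> X0.
have cv := @contraction_cvg R 'M[R]_(n, d') _ f _ ctr X0 I.
have fx := @contraction_cvg_fixed R 'M[R]_(n, d') _ f _ ctr X0 I closedT.
have := uniq _ fx => <-.
exact: cv.
Qed.
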